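(* Let $S$ be a poset and let $S\otimes_i G_i$ and $S\otimes_i H_i$ be terminating ordered joins in the same shape $S$. Suppose $i_0\in S$ is a maximal element of $S$ and $G_i=H_i$ for all $i\neq i_0$. If $G_{i_0}\not\simeq_0 H_{i_0}$, then $S\otimes_i G_i \not\simeq_0 S\otimes_i H_i$. (Together with the special substitution theorem: $S\otimes_i G_i\simeq_0 S\otimes_i H_i$ if and only if $G_{i_0}\simeq_0 H_{i_0}$.)
   Context: All games are impartial combinatorial games under normal play; a game is determined by its set of options, and $G \to G'$ means $G'$ is an option of $G$. A game is terminating if it admits no infinite sequence of moves. $\mathbf{0}$ denotes the game with no options. The Grundy number of a terminating game $G$ is the ordinal $\Gamma_0(G)=\operatorname{mex}\{\Gamma_0(G') : G\to G'\}$, where $\operatorname{mex}\Lambda$ is the least ordinal not in the set of ordinals $\Lambda$. Games $G,H$ are $0$-equivalent, $G\simeq_0 H$, if $\Gamma_0(G)=\Gamma_0(H)$. Ordered join: for a poset $S$ and a family $(G_i)_{i\in S}$ of games, $S \otimes_i G_i$ is the game whose options are exactly the ordered joins $S \otimes_i G'_i$ obtained by choosing one $i_0\in S$ and an option $G_{i_0}\to G'_{i_0}$, and setting $G'_i=\mathbf{0}$ for all $i>i_0$ and $G'_i=G_i$ for all other $i\ne i_0$. *)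

(* Defs.v *)
From mathcomp Require Import all_boot all_order.
From Stdlib Require Import Relations.Relation_Operators.

Set Implicit Arguments.
Unset Strict Implicit.
Unset Printing Implicit Defensive.
Import Order.TTheory.
Local Open Scope order_scope.

(* Ordinals, represented as well-founded trees (Aczel/Brouwer style): *)
(* the tree OL I f stands for the ordinal sup_i (f i + 1).            *)
(* Comparison is by rank; oeq is equality of the represented ordinals. *)
Inductive Ord : Type := OL : forall I : Type, (I -> Ord) -> Ord.

Fixpoint ole (o p : Ord) {struct o} : Prop :=
  match o, p with
  | OL _ f, OL _ g => forall i, exists j, ole (f i) (g j)
  end.

Definition oeq (o p : Ord) : Prop := ole o p /\ ole p o.

(* A set of ordinals is given by a predicate A closed under oeq.
   alpha is the mex of A: the least ordinal not in A. *)
Definition is_mex (A : Ord -> Prop) (alpha : Ord) : Prop :=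
  ~ A alpha /\ forall beta, ~ A beta -> ole alpha beta.

(* Impartial games: positions of a game graph (P, mv); mv x y means    *)
(* y is an option of x.  A game is a position.                         *)
Section Games.
Variables (P : Type) (mv : P -> P -> Prop).

Definition terminating (x : P) : Prop := Acc (fun a b => mv b a) x.

Definition reach (x y : P) : Prop := clos_refl_trans P mv x y.

Definition option_values (gam : P -> Ord) (y : P) : Ord -> Prop :=
  fun beta => exists z, mv y z /\ oeq (gam z) beta.

Definition grundy_labeling (x : P) (gam : P -> Ord) : Prop :=
  forall y, reach x y -> is_mex (option_values gam y) (gam y).

Definition grundy (x : P) (alpha : Ord) : Prop :=
  exists gam, grundy_labeling x gam /\ oeq (gam x) alpha.
End Games.

Definition equiv0 (P1 P2 : Type) (mv1 : P1 -> P1 -> Prop) (mv2 : P2 -> P2 -> Prop)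
  (x : P1) (y : P2) : Prop :=
  exists alpha beta, grundy mv1 x alpha /\ grundy mv2 y beta /\ oeq alpha beta.

(* Ordered join.  A position of S (x)_i G_i is a family F : S -> option P,*)
(* where None stands for the game 0 and Some x for the game x.          *)
Section OrderedJoin.
Context {d : Order.disp_t} (S : porderType d) (P : Type) (mv : P -> P -> Prop).

Definition join_move (F F' : S -> option P) : Prop :=
  exists i0 : S, exists x x' : P,
    [/\ F i0 = Some x, mv x x', F' i0 = Some x',
        (forall i, i0 < i -> F' i = None)
      & (forall i, i != i0 -> ~~ (i0 < i) -> F' i = F i)].

Definition ojoin (G : S -> P) : S -> option P := fun i => Some (G i).
End OrderedJoin.

(* Main.v *)
Require Import Defs.
From mathcomp Require Import all_boot all_order.
From Stdlib Require Import Relations.Relation_Operators Relations.Operators_Properties.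
From Stdlib Require Import Wellfounded.Transitive_Closure Classical FunctionalExtensionality.
Local Open Scope order_scope.
Set Implicit Arguments.
Unset Strict Implicit.

Definition olt (o p : Ord) : Prop := match p with OL _ g => exists j, ole o (g j) end.

Lemma ole_refl o : ole o o.
Proof. elim: o => I f IH /=. move=> i; exists i; exact: IH. Qed.

Lemma ole_trans o p q : ole o p -> ole p q -> ole o q.
Proof.
elim: o p q => I f IH [J g] [K h] /= H1 H2 i.
have [j Hj] := H1 i. have [k Hk] := H2 j. exists k. exact: IH Hj Hk.
Qed.

Lemma ole_OL_lt I f p i : ole (@OL I f) p -> olt (f i) p.
Proof. case: p => J g /= H. exact: H. Qed.

Lemma lt_ole_OL I f p : (forall i, olt (f i) p) -> ole (@OL I f) p.
Proof. case: p => J g /= H. exact: H. Qed.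

Lemma olt_ole o p : olt o p -> ole o p.
Proof.
elim: o p => I f IH [J g] /= [j Hj] i.
exists j. apply: IH. exact: ole_OL_lt Hj.
Qed.

Lemma olt_irrefl o : ~ olt o o.
Proof.
elim: o => I f IH /= [j Hj]. apply: (IH j). exact: ole_OL_lt Hj.
Qed.

Lemma olt_ole_trans o p q : olt o p -> ole p q -> olt o q.
Proof.
case: p => J g; case: q => K h /= [j Hj] H. have [k Hk] := H j. exists k. exact: ole_trans Hj Hk.
Qed.

Lemma ole_olt_trans o p q : ole o p -> olt p q -> olt o q.
Proof. case: q => K h /= H [j Hj]. exists j. exact: ole_trans H Hj. Qed.

Lemma ototal : forall q p, (olt p q \/ ole q p) /\ (olt q p \/ ole p q).
Proof.
elim=> J g IHq. elim=> I f IHp. split.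
- case: (classic (exists j, ole (OL f) (g j))) => [H|H]; [left; exact H| right].
  apply: lt_ole_OL => j.
  have [_ [Hl|Hl]] := IHq j (OL f); first exact Hl.
  by case: H; exists j.
- case: (classic (exists i, ole (OL g) (f i))) => [H|H]; [left; exact H| right].
  apply: lt_ole_OL => i.
  have [[Hl|Hl] _] := IHp i; first exact Hl.
  by case: H; exists i.
Qed.

Lemma total p q : olt p q \/ ole q p.
Proof. exact: (ototal q p).1. Qed.

Lemma oeq_refl o : oeq o o. Proof. split; exact: ole_refl. Qed.
Lemma oeq_sym o p : oeq o p -> oeq p o. Proof. by case. Qed.
Lemma oeq_trans o p q : oeq o p -> oeq p q -> oeq o q.
Proof. move=> [a b] [c e]; split; [exact: ole_trans a c| exact: ole_trans e b]. Qed.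

Lemma mex_below A m b : is_mex A m -> olt b m -> A b.
Proof.
move=> [Hn Hmin] Hb. apply: NNPP => Hnb. idtac.
have := olt_ole_trans Hb (Hmin _ Hnb). exact: olt_irrefl.
Qed.

Lemma mex_uniq A B m m' : is_mex A m -> is_mex B m' ->
  (forall b, A b -> B b) -> (forall b, B b -> A b) -> oeq m m'.
Proof.
move=> [Hm Hmin] [Hm' Hmin'] AB BA; split.
- apply: Hmin => H; exact: Hm' (AB _ H).
- apply: Hmin' => H; exact: Hm (BA _ H).
Qed.

Section Label.
Variables (P : Type) (mv : P -> P -> Prop).
Definition Rt (a b : P) : Prop := mv b a /\ terminating mv b.
Lemma Rt_wf : well_founded Rt.
Proof.
move=> b. case: (classic (terminating mv b)) => Hb.
- elim: Hb => c _ IH. constructor=> a [Hca _]. exact: IH Hca.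
- constructor => a [_ Ht]; contradiction.
Qed.

Definition lab_step (y : P) (rec : forall z, Rt z y -> Ord) : Ord :=
  @OL {w : {z : P | Rt z y} | forall b, olt b (rec (proj1_sig w) (proj2_sig w)) ->
        exists w' : {z : P | Rt z y}, oeq (rec (proj1_sig w') (proj2_sig w')) b}
     (fun w => rec (proj1_sig (proj1_sig w)) (proj2_sig (proj1_sig w))).
Definition lab : P -> Ord := Fix Rt_wf (fun _ => Ord) lab_step.

Lemma lab_eq y : lab y = @lab_step y (fun z _ => lab z).
Proof.
rewrite /lab Fix_eq //= => x f g H.
have -> : f = g by apply: functional_extensionality_dep => z; apply: functional_extensionality_dep => p; exact: H.
by [].
Qed.

Lemma lab_mex y : terminating mv y -> is_mex (option_values mv lab y) (lab y).
Proof.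
move=> Ty.
pose Q (w : {z : P | Rt z y}) := forall b, olt b (lab (proj1_sig w)) ->
        exists w' : {z : P | Rt z y}, oeq (lab (proj1_sig w')) b.
have Fa : forall w, Q w -> olt (lab (proj1_sig w)) (lab y).
  move=> w Qw. rewrite [X in olt _ X]lab_eq /=. exists (exist _ w Qw). exact: ole_refl.
have Fb : forall b, olt b (lab y) -> exists w : {w | Q w}, ole b (lab (proj1_sig (proj1_sig w))).
  move=> b. rewrite [X in olt _ X]lab_eq /=. by [].
have Fc : forall b, (forall w : {w | Q w}, olt (lab (proj1_sig (proj1_sig w))) b) -> ole (lab y) b.
  move=> b H. rewrite [X in ole X _]lab_eq. apply: lt_ole_OL. exact: H.
have OV : forall b, option_values mv lab y b <-> exists w : {z | Rt z y}, oeq (lab (proj1_sig w)) b.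
  move=> b; split.
  - move=> [z [Hz Hb]]. by exists (exist _ z (conj Hz Ty)).
  - move=> [[z [Hz Hz2]] Hb]. by exists z.
have QW : forall (w : {z | Rt z y}) b, olt b (lab (proj1_sig w)) -> olt b (lab y) ->
     exists w' : {z : P | Rt z y}, oeq (lab (proj1_sig w')) b.
  move=> w b _ Hb0; have [[w1 Qw1] Hb] := Fb b Hb0; simpl in Hb.
  case: (total b (lab (proj1_sig w1))) => H.
  - exact: Qw1.
  - by exists w1; split.
split.
- move=> /OV [w Hw].
  have Qw : Q w.
    move=> b Hb. apply (QW _ _ Hb). apply: olt_ole_trans Hb _. exact: Hw.1.
  have := olt_ole_trans (Fa w Qw) Hw.2. exact: olt_irrefl.
- move=> b Hb. apply: Fc => [[w Qw]] /=.
  case: (total (lab (proj1_sig w)) b) => // H.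
  exfalso; apply: Hb; apply/OV.
  case: (total b (lab (proj1_sig w))) => H2.
  + exact: Qw.
  + by exists w; split.
Qed.
End Label.

Section Gen.
Variables (P : Type) (mv : P -> P -> Prop).

Lemma term_step x y : terminating mv x -> mv x y -> terminating mv y.
Proof. move=> Hx Hy. exact: (Acc_inv Hx Hy). Qed.

Lemma term_reach x y : terminating mv x -> reach mv x y -> terminating mv y.
Proof.
move=> Hx H; induction H as [a b Hab|a|a b c _ IH1 _ IH2].
- exact: term_step Hx Hab.
- exact: Hx.
- exact: IH2 (IH1 Hx).
Qed.

Lemma uniq_lab (gam1 gam2 : P -> Ord) z : terminating mv z ->
  (forall w, reach mv z w -> is_mex (option_values mv gam1 w) (gam1 w)) ->
  (forall w, reach mv z w -> is_mex (option_values mv gam2 w) (gam2 w)) ->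
  oeq (gam1 z) (gam2 z).
Proof.
move=> Hz; elim: Hz => {}z _ IH V1 V2.
apply: (mex_uniq (V1 z (rt_refl _ _ _)) (V2 z (rt_refl _ _ _))).
- move=> b [w [Hw Hb]]. exists w; split => //.
  have E := IH w Hw (fun u h => V1 u (rt_trans _ _ _ _ _ (rt_step _ _ _ _ Hw) h))
                    (fun u h => V2 u (rt_trans _ _ _ _ _ (rt_step _ _ _ _ Hw) h)).
  exact: oeq_trans (oeq_sym E) Hb.
- move=> b [w [Hw Hb]]. exists w; split => //.
  have E := IH w Hw (fun u h => V1 u (rt_trans _ _ _ _ _ (rt_step _ _ _ _ Hw) h))
                    (fun u h => V2 u (rt_trans _ _ _ _ _ (rt_step _ _ _ _ Hw) h)).
  exact: oeq_trans E Hb.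
Qed.
End Gen.

Section Join.
Context {d : Order.disp_t} (S : porderType d) (P : Type) (mv : P -> P -> Prop) (i0 : S).
Hypothesis imax : forall j : S, ~ (i0 < j).

Local Notation JM := (@join_move d S P mv).
Local Notation pos := (S -> option P).

Definition upd (X : pos) (v : P) : pos := fun i => if i == i0 then Some v else X i.

Lemma upd_i0 X v : upd X v i0 = Some v.
Proof. by rewrite /upd eqxx. Qed.

Lemma upd_off X v i : i != i0 -> upd X v i = X i.
Proof. by move=> h; rewrite /upd (negbTE h). Qed.

Lemma nimax i : ~~ (i0 < i).
Proof. apply/negP; exact: imax. Qed.

Lemma jm_upd X x v : X i0 = Some x -> mv x v -> JM X (upd X v).
Proof.
move=> Hx Hv. exists i0, x, v. split => //.
- exact: upd_i0.
- move=> i Hi. by have := imax Hi.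
- move=> i Hi _. exact: upd_off.
Qed.

Lemma term_comp X x : terminating JM X -> X i0 = Some x -> terminating mv x.
Proof.
move=> HX; elim: HX x => {}X _ IH x Hx. constructor => v Hv.
apply: (IH (upd X v)); [exact: jm_upd Hx Hv | exact: upd_i0].
Qed.

Definition desc (X X1 : pos) := clos_trans _ (fun a b => JM b a) X1 X.

Lemma desc_step X X1 : JM X X1 -> desc X X1.
Proof. move=> h. by apply: t_step. Qed.

Lemma desc_trans X X1 X2 : desc X X1 -> desc X1 X2 -> desc X X2.
Proof. move=> h1 h2. rewrite /desc in h1 h2 *. eapply t_trans; [exact h2|exact h1]. Qed.

Lemma desc_reach X X1 : desc X X1 -> reach JM X X1.
Proof.
rewrite /desc => H; elim: H => {X X1}.
- move=> a b h. exact: rt_step.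
- move=> a b c _ h1 _ h2. exact: rt_trans h2 h1.
Qed.

Lemma reach_split X X1 : reach JM X X1 -> X1 = X \/ desc X X1.
Proof.
move=> H; elim: H => {X X1}.
- move=> a b h. right. exact: t_step.
- move=> a. by left.
- move=> a b c _ [->|h1] _ [->|h2]; [by left|by right|by right|].
  right. exact: desc_trans h1 h2.
Qed.

Definition claim (gam1 gam2 : pos -> Ord) (X Y : pos) := forall x y,
  X i0 = Some x -> Y i0 = Some y -> (forall i, i != i0 -> X i = Y i) ->
  oeq (lab mv x) (lab mv y) -> oeq (gam1 X) (gam2 Y).

Lemma claim_sym gam1 gam2 X Y : claim gam1 gam2 X Y -> claim gam2 gam1 Y X.
Proof.
move=> C y x Hy Hx Hag Hxy. apply: oeq_sym. apply: C Hx Hy _ (oeq_sym Hxy).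
move=> i h. by rewrite Hag.
Qed.

Lemma half (gam1 gam2 : pos -> Ord) X Y :
  terminating JM X -> terminating JM Y ->
  (forall Z, reach JM X Z -> is_mex (option_values JM gam1 Z) (gam1 Z)) ->
  (forall Z, reach JM Y Z -> is_mex (option_values JM gam2 Z) (gam2 Z)) ->
  (forall X1 Y1, (desc X X1 /\ reach JM Y Y1) \/ (reach JM X X1 /\ desc Y Y1) ->
     claim gam1 gam2 X1 Y1) ->
  forall x y, X i0 = Some x -> Y i0 = Some y -> (forall i, i != i0 -> X i = Y i) ->
  oeq (lab mv x) (lab mv y) -> ~ option_values JM gam1 X (gam2 Y).
Proof.
move=> TX TY V1 V2 IH x y Hx Hy Hag Hxy [X' [HXX' Heq]].
have notY : forall Y', JM Y Y' -> oeq (gam2 Y') (gam2 Y) -> False.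
  move=> Y' h e. apply: (V2 Y (rt_refl _ _ _)).1. by exists Y'.
have Tx := term_comp TX Hx. have Ty := term_comp TY Hy.
have Mx := lab_mex Tx. have My := lab_mex Ty.
case: (HXX') => k [x1 [x1' [Hk Hm Hk' Hres Hkeep]]].
case: (eqVneq k i0) => [Ek|Nk].
- subst k. rewrite Hx in Hk. case: Hk => Ex1. subst x1.
  have Hoff : forall i, i != i0 -> X' i = X i.
    move=> i h. apply: Hkeep h (nimax i).
  case: (total (lab mv x1') (lab mv x)) => Hc.
  + have [y' [Hyy' Hy']] := mex_below My (olt_ole_trans Hc Hxy.1).
    have JY := jm_upd Hy Hyy'.
    have E : oeq (gam1 X') (gam2 (upd Y y')).
      apply: (IH X' (upd Y y')).
      * left; split; [exact: desc_step | exact: rt_step].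
      * exact: Hk'.
      * exact: upd_i0.
      * move=> i h. by rewrite Hoff // upd_off // Hag.
      * exact: oeq_sym Hy'.
    exact: notY JY (oeq_trans (oeq_sym E) Heq).
  + case: (total (lab mv x) (lab mv x1')) => Hc2.
    * have Tx1' := term_step Tx Hm.
      have [x'' [Hx'' Hx''e]] := mex_below (lab_mex Tx1') Hc2.
      have JX' := jm_upd Hk' Hx''.
      have E : oeq (gam1 (upd X' x'')) (gam2 Y).
        apply: (IH (upd X' x'') Y).
        -- left; split; [ | exact: rt_refl].
           exact: desc_trans (desc_step HXX') (desc_step JX').
        -- exact: upd_i0.
        -- exact: Hy.
        -- move=> i h. by rewrite upd_off // Hoff // Hag.
        -- exact: oeq_trans Hx''e Hxy.
      apply: (V1 X' (rt_step _ _ _ _ HXX')).1.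
      exists (upd X' x''); split => //.
      exact: oeq_trans E (oeq_sym Heq).
    * have HH : oeq (lab mv x1') (lab mv x) := conj Hc2 Hc. apply: Mx.1. by exists x1'.
- case: (boolP (k < i0)) => Hki.
  + have JYX' : JM Y X'.
      exists k, x1, x1'. split => //.
      * by rewrite -Hag.
      * move=> i Hi Hni. rewrite Hkeep //.
        case: (eqVneq i i0) => [Ei|Ni]; first by subst; rewrite Hki in Hni.
        exact: Hag.
    have TX' := term_step TX HXX'.
    have U := uniq_lab TX'
      (fun W h => V1 W (rt_trans _ _ _ _ _ (rt_step _ _ _ _ HXX') h))
      (fun W h => V2 W (rt_trans _ _ _ _ _ (rt_step _ _ _ _ JYX') h)).
    exact: notY JYX' (oeq_trans (oeq_sym U) Heq).
  + have HX'i0 : X' i0 = Some x by rewrite Hkeep // eq_sym.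
    pose Y' : pos := fun i => if i == i0 then Some y else X' i.
    have JYY' : JM Y Y'.
      exists k, x1, x1'. split => //.
      * by rewrite -Hag.
      * by rewrite /Y' (negbTE Nk).
      * move=> i Hi. rewrite /Y'. case: eqP => [Ei|_]; last exact: Hres.
        by subst; rewrite Hi in Hki.
      * move=> i Hi Hni. rewrite /Y'. case: eqP => [->|/eqP Ni]; first by rewrite Hy.
        rewrite Hkeep //. exact: Hag.
    have E : oeq (gam1 X') (gam2 Y').
      apply: (IH X' Y').
      * left; split; [exact: desc_step | exact: rt_step].
      * exact: HX'i0.
      * by rewrite /Y' eqxx.
      * move=> i h. by rewrite /Y' (negbTE h).
      * exact: Hxy.
    exact: notY JYY' (oeq_trans (oeq_sym E) Heq).
Qed.

Lemma mainclaim (gam1 gam2 : pos -> Ord) X0 Y0 :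
  terminating JM X0 -> terminating JM Y0 ->
  (forall Z, reach JM X0 Z -> is_mex (option_values JM gam1 Z) (gam1 Z)) ->
  (forall Z, reach JM Y0 Z -> is_mex (option_values JM gam2 Z) (gam2 Z)) ->
  forall X, reach JM X0 X -> forall Y, reach JM Y0 Y -> claim gam1 gam2 X Y.
Proof.
move=> T0 U0 V1 V2 X RX.
have AX := Acc_clos_trans _ _ _ (term_reach T0 RX).
elim: AX RX => {}X _ IHX RX Y RY.
have AY := Acc_clos_trans _ _ _ (term_reach U0 RY).
elim: AY RY => {}Y _ IHY RY.
move=> x y Hx Hy Hag Hxy.
have TX := term_reach T0 RX. have TY := term_reach U0 RY.
have V1' : forall Z, reach JM X Z -> is_mex (option_values JM gam1 Z) (gam1 Z).
  move=> Z h. exact: V1 (rt_trans _ _ _ _ _ RX h).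
have V2' : forall Z, reach JM Y Z -> is_mex (option_values JM gam2 Z) (gam2 Z).
  move=> Z h. exact: V2 (rt_trans _ _ _ _ _ RY h).
have IH' : forall X1 Y1, (desc X X1 /\ reach JM Y Y1) \/ (reach JM X X1 /\ desc Y Y1) ->
     claim gam1 gam2 X1 Y1.
  move=> X1 Y1 [[h1 h2]|[h1 h2]].
  - apply (IHX _ h1).
    + exact: rt_trans RX (desc_reach h1).
    + exact: rt_trans RY h2.
  - case: (reach_split h1) => [->|hd].
    + apply (IHY _ h2). exact: rt_trans RY (desc_reach h2).
    + apply (IHX _ hd).
      * exact: rt_trans RX (desc_reach hd).
      * exact: rt_trans RY (desc_reach h2).
have IH'' : forall Y1 X1, (desc Y Y1 /\ reach JM X X1) \/ (reach JM Y Y1 /\ desc X X1) ->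
     claim gam2 gam1 Y1 X1.
  move=> Y1 X1 h. apply: claim_sym. apply: IH'.
  by case: h => [[a b]|[a b]]; [right|left].
split.
- apply: (V1' X (rt_refl _ _ _)).2.
  exact (half TX TY V1' V2' IH' Hx Hy Hag Hxy).
- apply: (V2' Y (rt_refl _ _ _)).2.
  apply (half TY TX V2' V1' IH'' Hy Hx (x:=y) (y:=x)); last exact: oeq_sym Hxy.
  move=> i h. by rewrite Hag.
Qed.

Lemma lt_case (gam1 gam2 : pos -> Ord) X Y x y :
  terminating JM X -> terminating JM Y ->
  (forall Z, reach JM X Z -> is_mex (option_values JM gam1 Z) (gam1 Z)) ->
  (forall Z, reach JM Y Z -> is_mex (option_values JM gam2 Z) (gam2 Z)) ->
  X i0 = Some x -> Y i0 = Some y -> (forall i, i != i0 -> X i = Y i) ->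
  olt (lab mv x) (lab mv y) -> ~ oeq (gam1 X) (gam2 Y).
Proof.
move=> TX TY V1 V2 Hx Hy Hag Hlt H.
have Ty := term_comp TY Hy.
have [y' [Hyy' He]] := mex_below (lab_mex Ty) Hlt.
have JY := jm_upd Hy Hyy'.
have E := mainclaim TX TY V1 V2 (rt_refl _ _ _) (rt_step _ _ _ _ JY) Hx (upd_i0 Y y')
  (fun i h => etrans (Hag i h) (esym (upd_off Y y' h))) (oeq_sym He).
apply: (V2 Y (rt_refl _ _ _)).1. exists (upd Y y'); split => //.
exact: oeq_trans (oeq_sym E) H.
Qed.
End Join.

Theorem mainTheorem4 {d : Order.disp_t} (S : porderType d) (P : Type)
  (mv : P -> P -> Prop) (G H : S -> P) (i0 : S) :
  terminating (join_move mv) (ojoin G) ->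
  terminating (join_move mv) (ojoin H) ->
  (forall j : S, ~ (i0 < j)) ->
  (forall i : S, i != i0 -> G i = H i) ->
  ~ equiv0 mv mv (G i0) (H i0) ->
  ~ equiv0 (join_move mv) (join_move mv) (ojoin G) (ojoin H).
Proof.
move=> TG TH imax Hag Hne [alpha [beta [[gamG [VG eG]] [[gamH [VH eH]] eab]]]].
have E : oeq (gamG (ojoin G)) (gamH (ojoin H)).
  exact: oeq_trans eG (oeq_trans eab (oeq_sym eH)).
have Hag' : forall i, i != i0 -> ojoin G i = ojoin H i.
  move=> i h. by rewrite /ojoin Hag.
case: (total (lab mv (G i0)) (lab mv (H i0))) => H1.
- exact: (lt_case imax TG TH VG VH (erefl _) (erefl _) Hag' H1 E).
case: (total (lab mv (H i0)) (lab mv (G i0))) => H2.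
- apply: (lt_case imax TH TG VH VG (erefl _) (erefl _) _ H2 (oeq_sym E)).
  move=> i h. by rewrite Hag'.
apply: Hne. exists (lab mv (G i0)), (lab mv (H i0)).
have TGi := term_comp imax TG (erefl (ojoin G i0)).
have THi := term_comp imax TH (erefl (ojoin H i0)).
split; [|split].
- exists (lab mv); split; last exact: oeq_refl.
  move=> z h. exact: lab_mex (term_reach TGi h).
- exists (lab mv); split; last exact: oeq_refl.
  move=> z h. exact: lab_mex (term_reach THi h).
- by split.
Qed.
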